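(* Let $G$ and $H$ be connected graphs, each with at least two vertices, such that $\delta(H)>|V(H)|/2$. Let $S\subseteq E(G\times H)$. <ol> <li>If $|S|<\delta(G)\delta(H)$, then every $H$-fiber ${}_xH$ ($x\in V(G)$) is contained in a single connected component of $G\times H-S$.</li> <li>Assume it is not the case that $G\cong K_2$ and $H\cong\overline{K_{2l-1}}\vee lK_2$ for some integer $l\ge1$. Assume also that $|S|=\delta(G)\delta(H)$ and that $S$ is not the set of all edges incident with any single vertex of $G\times H$. Then every $H$-fiber ${}_xH$ is contained in a single connected component of $G\times H-S$.</li> </ol>
   Context: All graphs are finite, simple and undirected. $\delta(\cdot)$ denotes minimum degree. The direct product $G\times H$ has vertex set $V(G)\times V(H)$. Two vertices $(x,u),(y,v)$ are adjacent if and only if $xy\in E(G)$ and $uv\in E(H)$. For $x\in V(G)$, the $H$-fiber is ${}_xH=\{(x,u):u\in V(H)\}$. $\overline{K_{2l-1}}\vee lK_2$ is the join of an edgeless graph on $2l-1$ vertices with a perfect matching on $2l$ vertices. Equivalently, it is $K_{2l-1,2l}$ with $l$ pairwise disjoint edges added inside the part of size $2l$. *)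

(* Defs.v *)
(* Simple graphs = symmetric irreflexive boolean relations on a finType. *)
From mathcomp Require Import all_boot.
Set Implicit Arguments. Unset Strict Implicit. Unset Printing Implicit Defensive.

Definition deg (T : finType) (e : rel T) (x : T) : nat := #|[set y | e x y]|.

(* minimum degree (the seed #|T| is an upper bound for every degree, so for
   nonempty T this is exactly the minimum degree) *)
Definition mindeg (T : finType) (e : rel T) : nat :=
  \big[minn/#|T|]_(x : T) deg e x.

Definition gconnected (T : finType) (e : rel T) : Prop :=
  forall x y : T, connect e x y.

Definition dprod_rel (T1 T2 : finType) (e1 : rel T1) (e2 : rel T2) : rel (T1 * T2) :=
  fun p q => e1 p.1 q.1 && e2 p.2 q.2.

Definition edges (T : finType) (e : rel T) : {set {set T}} :=
  [set [set p.1; p.2] | p in [set p : T * T | e p.1 p.2]].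

Definition del_edges (T : finType) (e : rel T) (S : {set {set T}}) : rel T :=
  fun x y => e x y && ([set x; y] \notin S).

Definition incident_edges (T : finType) (e : rel T) (v : T) : {set {set T}} :=
  [set E in edges e | v \in E].

Definition giso (T1 T2 : finType) (e1 : rel T1) (e2 : rel T2) : Prop :=
  exists f : T1 -> T2, bijective f /\ forall x y, e1 x y = e2 (f x) (f y).

Definition K2rel : rel bool := fun x y => x != y.

(* \overline{K_{2l-1}} \vee lK_2 : vertices inl i (i < 2l-1, independent set)
   and inr a (a < 2l, perfect matching {2k, 2k+1}) *)
Definition joinrel (l : nat) : rel ('I_(2 * l - 1) + 'I_(2 * l)) :=
  fun u v => match u, v with
  | inl _, inl _ => false
  | inl _, inr _ => true
  | inr _, inl _ => true
  | inr a, inr b => (a != b) && ((val a)./2 == (val b)./2)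
  end.
Arguments joinrel l : clear implicits.

(* Main.v *)
From Stdlib Require Import Lia Arith.
Lemma mulge1 (a b : nat) : 1 <= b -> a <= a*b.
Proof. intros; nia. Qed.
Lemma mulge2 (a b : nat) : 1 <= a -> 1 <= b -> b + (a - 1) <= a*b.
Proof. intros; nia. Qed.

Lemma arith1 (n d x y G1 G2 : nat) :
  n < 2*d -> d < n -> 1 <= x -> x < n -> y <= n ->
  x*(d-y) <= G1 -> (n-y)*(d-(n-x)) <= G1 -> y*(d-x) <= G2 -> (n-x)*(d-(n-y)) <= G2 ->
  d <= G1 + G2.
Proof.
intros H1 H2 H3 H4 H5 B1 B2 B3 B4.
destruct (Nat.le_gt_cases x (n-d)) as [X|X].
- assert (1 <= d - x) by lia.
  destruct (Nat.le_gt_cases y (n-d)) as [Y|Y].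
  + assert (d-y <= x*(d-y)) by (rewrite Nat.mul_comm; apply mulge1; lia). assert (y <= y*(d-x)) by (apply mulge1; lia). lia.
  + destruct (Nat.le_gt_cases d y) as [Y'|Y'].
    * assert (y <= y*(d-x)) by (apply mulge1; lia). lia.
    * assert (x <= x*(d-y)) by (apply mulge1; lia). assert ((n-x) <= (n-x)*(d-(n-y))) by (apply mulge1; lia). lia.
- destruct (Nat.le_gt_cases d x) as [X'|X'].
  + destruct (Nat.le_gt_cases d y) as [Y'|Y'].
    * destruct (Nat.eq_dec y n) as [E|E].
      -- subst y. assert ((n-x) <= (n-x)*(d-(n-n))) by (apply mulge1; lia). assert (1 <= n-x) by lia.
         assert (d <= d*(n-x)) by (apply mulge1; lia). lia.
      -- assert ((d-(n-x)) <= (d-(n-x))*(n-y)) by (apply mulge1; lia). assert ((n-x) <= (n-x)*(d-(n-y))) by (apply mulge1; lia). lia.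
    * assert (x <= x*(d-y)) by (apply mulge1; lia). lia.
  + assert (y <= y*(d-x)) by (apply mulge1; lia). assert ((n-y) <= (n-y)*(d-(n-x))) by (apply mulge1; lia). lia.
Qed.

Lemma arith2 (n d x y G1 G2 : nat) :
  n < 2*d -> d < n -> 1 <= x -> x < n -> 1 <= y -> y < n ->
  x*(d-y) <= G1 -> (n-y)*(d-(n-x)) <= G1 -> y*(d-x) <= G2 -> (n-x)*(d-(n-y)) <= G2 ->
  G1 + G2 <= d ->
  n = 3 \/ (n+1 = 2*d /\ ((x+1 = d /\ y = d) \/ (x = d /\ y+1 = d))).
Proof.
intros H1 H2 H3 H4 H5 H6 B1 B2 B3 B4 S.
destruct (Nat.le_gt_cases x (n-d)) as [X|X].
- assert (1 <= d - x) by lia.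
  destruct (Nat.le_gt_cases y (n-d)) as [Y|Y].
  + assert ((d-y) + (x - 1) <= x*(d-y)) by (apply mulge2; lia). assert ((d-x) + (y - 1) <= y*(d-x)) by (apply mulge2; lia). lia.
  + destruct (Nat.le_gt_cases d y) as [Y'|Y'].
    * assert (y + ((d-x) - 1) <= y*(d-x)) by (rewrite Nat.mul_comm; apply mulge2; lia). lia.
    * assert (x <= x*(d-y)) by (apply mulge1; lia). assert ((n-x) <= (n-x)*(d-(n-y))) by (apply mulge1; lia). lia.
- destruct (Nat.le_gt_cases d x) as [X'|X'].
  + destruct (Nat.le_gt_cases d y) as [Y'|Y'].
    * assert ((d-(n-x)) + ((n-y) - 1) <= (n-y)*(d-(n-x))) by (apply mulge2; lia). assert ((d-(n-y)) + ((n-x) - 1) <= (n-x)*(d-(n-y))) by (apply mulge2; lia). lia.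
    * assert (x + ((d-y) - 1) <= x*(d-y)) by (rewrite Nat.mul_comm; apply mulge2; lia). assert ((d-(n-y)) <= (n-x)*(d-(n-y))) by (rewrite Nat.mul_comm; apply mulge1; lia). lia.
  + assert (y <= y*(d-x)) by (apply mulge1; lia). assert ((n-y) <= (n-y)*(d-(n-x))) by (apply mulge1; lia). lia.
Qed.
Require Import Defs.
From mathcomp Require Import all_boot.
Set Implicit Arguments. Unset Strict Implicit. Unset Printing Implicit Defensive.

Definition cnt (T : finType) (e : rel T) (A B : {set T}) : nat :=
  \sum_(a : T) \sum_(b : T) (e a b && (a \in A) && (b \notin B)).

Lemma cnt_rows (T : finType) (e : rel T) (A B : {set T}) :
  cnt e A B = \sum_(a in A) #|[set b | e a b & b \notin B]|.
Proof.
rewrite /cnt [RHS]big_mkcond /=; apply: eq_bigr => a _.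
case: (boolP (a \in A)) => aA.
  rewrite -sum1dep_card [RHS]big_mkcond /=; apply: eq_bigr => b _.
  by rewrite andbT; case: (_ && _).
by rewrite big1 // => b _; rewrite andbF.
Qed.

Lemma cnt_swap (T : finType) (e : rel T) (sym : symmetric e) (A B : {set T}) :
  cnt e A B = cnt e (~: B) (~: A).
Proof.
rewrite /cnt exchange_big /=; apply: eq_bigr => a _; apply: eq_bigr => b _.
by rewrite !inE negbK sym; case: (e a b); case: (a \in B); case: (b \in A).
Qed.

Lemma row_lb (T : finType) (e : rel T) (d : nat) (hd : forall a, d <= deg e a)
  (B : {set T}) a : d - #|B| <= #|[set b | e a b & b \notin B]|.
Proof.
rewrite leq_subLR.
apply: (leq_trans (hd a)); rewrite /deg.
apply: (leq_trans (subset_leq_card (_ : _ \subset B :|: [set b | e a b & b \notin B]))).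
  by apply/subsetP => b; rewrite !inE; case: (b \in B) => //= ->.
by rewrite cardsU leq_subr.
Qed.

Lemma cnt_lb (T : finType) (e : rel T) (d : nat) (hd : forall a, d <= deg e a)
  (A B : {set T}) : #|A| * (d - #|B|) <= cnt e A B.
Proof.
rewrite cnt_rows -sum_nat_const; apply: leq_sum => a _; exact: row_lb.
Qed.

Lemma cnt_lb2 (T : finType) (e : rel T) (sym : symmetric e) (d : nat)
  (hd : forall a, d <= deg e a) (A B : {set T}) :
  (#|T| - #|B|) * (d - (#|T| - #|A|)) <= cnt e A B.
Proof.
have h (X : {set T}) : #|T| - #|X| = #|~: X| by rewrite -(cardsC X) addKn.
rewrite cnt_swap // !h; exact: cnt_lb.
Qed.

Lemma deg_lt (T : finType) (e : rel T) (irr : irreflexive e) a : deg e a < #|T|.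
Proof.
rewrite /deg; apply: (@leq_trans #|[set~ a]|.+1).
  rewrite ltnS; apply: subset_leq_card; apply/subsetP => b; rewrite !inE.
  by apply: contraTneq => ->; rewrite irr.
by rewrite cardsC1 prednK // (cardD1 a).
Qed.

Lemma cnt_claim (T : finType) (e : rel T) (sym : symmetric e) (irr : irreflexive e)
  (d : nat) (hd : forall a, d <= deg e a) (hn : #|T| < 2 * d)
  (A B : {set T}) (a c : T) (aA : a \in A) (cA : c \notin A) :
  d <= cnt e A B + cnt e B A.
Proof.
have dn : d < #|T| := leq_ltn_trans (hd a) (deg_lt irr a).
have x1 : 0 < #|A| by apply/card_gt0P; exists a.
have x2 : #|A| < #|T|.
  rewrite -(cardsC A) -addn1 leq_add2l; apply/card_gt0P; exists c; by rewrite inE.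
have y2 : #|B| <= #|T| := max_card _.
apply/leP; apply: (arith1 #|T| d #|A| #|B| (cnt e A B) (cnt e B A)); apply/leP => //.
- exact: cnt_lb.
- exact: cnt_lb2.
- exact: cnt_lb.
- exact: cnt_lb2.
Qed.


Lemma builder (T : finType) (e : rel T) (sym : symmetric e) (irr : irreflexive e)
  (A B : {set T})
  (hB : forall t, (t \in B) = (t \notin A))
  (hind : forall a a', a \in A -> a' \in A -> e a a' = false)
  (hcomp : forall a b, a \in A -> b \in B -> e a b)
  (hm : forall w, w \in B -> #|[set z in B | e w z]| = 1)
  (hc : #|A| + 1 = #|B|) : exists l, 1 <= l /\ giso (joinrel l) e.
Proof.
have : 0 < #|B| by rewrite -hc addn1.
case/card_gt0P => x0 _.
pose m w := odflt w [pick z in B | e w z].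
have mP w : w \in B -> (m w \in B) && e w (m w).
  move=> wB; rewrite /m; case: pickP => [z /andP[-> ->] //| none].
  have := hm w wB.
  suff -> : [set z in B | e w z] = set0 by rewrite cards0.
  by apply/setP => z; rewrite !inE none.
have mB w : w \in B -> m w \in B by move=> wB; case/andP: (mP w wB).
have em w : w \in B -> e w (m w) by move=> wB; case/andP: (mP w wB).
have muniq w z : w \in B -> z \in B -> e w z -> z = m w.
  move=> wB zB ewz; have /eqP/cards1P [y hy] := hm w wB.
  have : z \in [set z in B | e w z] by rewrite inE zB.
  have : m w \in [set z in B | e w z] by rewrite inE mB // em.
  by rewrite hy !inE => /eqP -> /eqP ->.
have mm w : w \in B -> m (m w) = w.
  by move=> wB; apply: esym; apply: muniq; rewrite ?mB // sym em.
have mneq w : w \in B -> m w != w.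
  by move=> wB; apply/eqP => h; have := em w wB; rewrite h irr.
pose R := [set w in B | enum_rank w < enum_rank (m w)].
have RB w : w \in R -> w \in B by rewrite inE => /andP[].
have Rm w : w \in B -> (w \in R) = ~~ (m w \in R).
  move=> wB; rewrite !inE wB mB // mm // /=.
  have /negbTE hne : enum_rank w != enum_rank (m w) :> nat.
    by rewrite (inj_eq (@ord_inj _)) (inj_eq enum_rank_inj) eq_sym mneq.
  by rewrite -leqNgt [RHS]leq_eqVlt hne.
have cardB : #|B| = (#|R|).*2.
  have -> : B = R :|: [set m w | w in R].
    apply/setP => w; apply/idP/idP.
      move=> wB; case: (boolP (w \in R)) => wR; first by rewrite inE wR.
      rewrite inE (negbTE wR) /=.
      apply/imsetP; exists (m w); last by rewrite mm.
      by move: wR; rewrite Rm // negbK.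
    by case/setUP => [/RB // | /imsetP [r rR ->]]; exact: mB (RB r rR).
  rewrite cardsU.
  have -> : R :&: [set m w | w in R] = set0.
    apply/setP => w; rewrite in_set0; apply/negP => /setIP [wR /imsetP [r rR wE]].
    by have := Rm r (RB r rR); rewrite rR -wE wR.
  rewrite cards0 subn0 card_in_imset ?addnn //.
  by move=> r1 r2 r1R r2R h; rewrite -(mm r1 (RB _ r1R)) h mm // RB.
pose l := #|R|.
have l1 : 0 < l.
  by rewrite lt0n; apply/eqP => h; move: hc; rewrite cardB -/l h addn1.
have cA : #|A| = 2 * l - 1 by rewrite mul2n -cardB -hc addnK.
exists l; split => //.
pose rp w := if w \in R then w else m w.
have rpm w : w \in B -> rp (m w) = rp w.
  move=> wB; rewrite /rp; case: (boolP (w \in R)) => wR.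
    by rewrite ifN ?mm // -Rm.
  by rewrite ifT // -[m w \in R]negbK -Rm ?mB ?mm.
have rpR w : w \in R -> rp w = w by move=> wR; rewrite /rp wR.
have sR : size (enum R) = l by rewrite -cardE.
have sA : size (enum A) = 2 * l - 1 by rewrite -cardE.
pose phi (v : 'I_(2 * l - 1) + 'I_(2 * l)) : T :=
  match v with
  | inl i => nth x0 (enum A) i
  | inr a => if odd a then m (nth x0 (enum R) a./2) else nth x0 (enum R) a./2
  end.
have hA (i : 'I_(2 * l - 1)) : nth x0 (enum A) i \in A.
  by rewrite -mem_enum mem_nth // sA.
have half (a : 'I_(2 * l)) : a./2 < size (enum R).
  by rewrite sR ltn_half_double -mul2n.
have hR (a : 'I_(2 * l)) : nth x0 (enum R) a./2 \in R.
  by rewrite -mem_enum mem_nth.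
have phiB (a : 'I_(2 * l)) : phi (inr a) \in B.
  rewrite /phi; case: (odd a); first exact/mB/RB/hR.
  exact/RB/hR.
have phiA (i : 'I_(2 * l - 1)) : phi (inl i) \in A by exact: hA.
have rpphi (a : 'I_(2 * l)) : rp (phi (inr a)) = nth x0 (enum R) a./2.
  rewrite /phi; case: (odd a); last by rewrite rpR.
  by rewrite rpm ?rpR // RB.
have nthR (a b : 'I_(2 * l)) : nth x0 (enum R) a./2 = nth x0 (enum R) b./2 -> a./2 = b./2.
  by move=> h; apply/eqP; rewrite -(nth_uniq x0 (half a) (half b) (enum_uniq _)) h.
have phiinj : injective phi.
  move=> [i|a] [j|b] h.
  - congr inl; apply/val_inj/eqP.
    by rewrite -(nth_uniq x0 (_ : i < size (enum A)) (_ : j < size (enum A)) (enum_uniq _)) ?sA //; apply/eqP.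
  - by move: (phiA i) (phiB b); rewrite -h hB => ->.
  - by move: (phiA j) (phiB a); rewrite h hB => ->.
  - congr inr; have h2 : a./2 = b./2 by apply: nthR; rewrite -!rpphi h.
    have ho : odd a = odd b.
      move: h; rewrite /phi h2; set r := nth _ _ _.
      have rB : r \in B by apply/RB/hR.
      case: (odd a); case: (odd b) => // h.
      + by move: (mneq r rB); rewrite h eqxx.
      + by move: (mneq r rB); rewrite -h eqxx.
    by apply/val_inj; rewrite /= -(odd_double_half a) -(odd_double_half b) ho h2.
exists phi; split.
  apply: inj_card_bij => //.
  rewrite card_sum !card_ord -cA mul2n -cardB -(cardsC A).
  suff -> : ~: A = B by [].
  by apply/setP => t; rewrite inE hB.
move=> [i|a] [j|b].
- by rewrite (hind _ _ (phiA i) (phiA j)).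
- by rewrite (hcomp _ _ (phiA i) (phiB b)).
- by rewrite sym (hcomp _ _ (phiA j) (phiB a)).
- rewrite [joinrel _ _ _]/=; apply/idP/idP.
  + case/andP => neq /eqP h2.
    have ho : odd a != odd b.
      apply: contra neq => /eqP ho; apply/eqP/val_inj.
      by rewrite /= -(odd_double_half a) -(odd_double_half b) ho h2.
    rewrite /phi -h2; set r := nth _ _ _.
    have rB : r \in B by apply/RB/hR.
    by move: ho; case: (odd a); case: (odd b) => // _; rewrite ?em // sym em.
  + move=> ee.
    have h : phi (inr b) = m (phi (inr a)) := muniq _ _ (phiB a) (phiB b) ee.
    apply/andP; split.
      by apply/eqP => ab; move: ee; rewrite ab irr.
    by apply/eqP; apply: nthR; rewrite -!rpphi h rpm // phiB.
Qed.

Lemma sum_tight (I : finType) (P : pred I) (f g : I -> nat) :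
  (forall i, P i -> g i <= f i) -> \sum_(i | P i) f i <= \sum_(i | P i) g i ->
  forall i, P i -> f i = g i.
Proof.
move=> hle hs i Pi; apply/eqP; rewrite eqn_leq hle // andbT leqNgt; apply/negP => lt.
move: hs; rewrite (bigD1 i) //= [X in _ <= X](bigD1 i) //= leqNgt; apply/negP/negPn.
by rewrite -addSn; apply: leq_add => //; apply: leq_sum => j /andP[Pj _]; exact: hle.
Qed.

Lemma pat (T : finType) (e : rel T) (sym : symmetric e) (irr : irreflexive e)
  (d : nat) (hd : forall a, d <= deg e a) (A B : {set T})
  (hA : #|A| + 1 = d) (hBc : #|B| = d) (hn : #|T| + 1 = 2 * d)
  (hs : cnt e A B + cnt e B A <= d) : exists l, 1 <= l /\ giso (joinrel l) e.
Proof.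
have d1 : d - #|A| = 1 by rewrite -hA addKn.
have G2 : d <= cnt e B A.
  by apply: leq_trans (cnt_lb hd B A); rewrite hBc d1 muln1.
have G1 : cnt e A B = 0.
  have := leq_trans hs G2; rewrite -{2}(add0n (cnt e B A)) leq_add2r leqn0.
  by move/eqP.
have NAB a b : a \in A -> e a b -> b \in B.
  move=> aA eab; move: G1 => /eqP; rewrite cnt_rows sum_nat_eq0.
  move/forall_inP/(_ a aA); rewrite cards_eq0 => /eqP/setP/(_ b).
  by rewrite !inE eab /= => /negbFE.
have compAB a b : a \in A -> b \in B -> e a b.
  move=> aA bB.
  have : [set y | e a y] == B.
    rewrite eqEcard hBc; apply/andP; split; last exact: hd.
    by apply/subsetP => y; rewrite inE; exact: NAB.
  by move/eqP/setP/(_ b); rewrite inE bB.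
have disj t : t \in A -> t \in B -> False.
  by move=> tA tB; move: (compAB t t tA tB); rewrite irr.
have AB0 : A :&: B = set0.
  by apply/setP => t; rewrite !inE; apply/negP => /andP[tA tB]; exact: disj t tA tB.
have cov : A :|: B = setT.
  apply/eqP; rewrite eqEcard subsetT cardsT /= cardsU AB0 cards0 subn0.
  by rewrite -(leq_add2r 1) hn addnAC hA hBc addnn mul2n.
have hB t : (t \in B) = (t \notin A).
  case: (boolP (t \in A)) => tA /=.
    by apply/negP => tB; exact: disj t tA tB.
  have : t \in A :|: B by rewrite cov inE.
  by rewrite inE (negbTE tA).
have hind a a' : a \in A -> a' \in A -> e a a' = false.
  by move=> aA a'A; apply/negP => ee; exact: disj a' a'A (NAB a a' aA ee).
have rows : \sum_(w in B) #|[set b | e w b & b \notin A]| <= \sum_(w in B) 1.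
  by rewrite -cnt_rows sum1_card hBc (leq_trans _ hs) // leq_addl.
have each := sum_tight (fun w (_ : w \in B) => leq_trans (eq_leq (esym d1)) (row_lb hd A w)) rows.
apply: (builder sym irr hB hind compAB) => [w wB|]; last by rewrite hA hBc.
rewrite -(each w wB); apply: eq_card => z; rewrite !inE hB andbC.
by case: (e w z).
Qed.

Lemma tri (T : finType) (e : rel T) (sym : symmetric e) (irr : irreflexive e)
  (hd : forall a, 2 <= deg e a) (hn : #|T| = 3) : exists l, 1 <= l /\ giso (joinrel l) e.
Proof.
have comp a b : a != b -> e a b.
  move=> ab.
  have : [set y | e a y] == [set~ a].
    rewrite eqEcard cardsC1 hn; apply/andP; split; last exact: hd.
    by apply/subsetP => y; rewrite !inE; apply: contraTneq => ->; rewrite irr.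
  by move/eqP/setP/(_ b); rewrite !inE eq_sym ab.
have : 0 < #|T| by rewrite hn.
case/card_gt0P => a0 _.
have cB : #|[set~ a0]| = 2 by rewrite cardsC1 hn.
apply: (builder sym irr (A := [set a0]) (B := [set~ a0])).
- by move=> t; rewrite !inE.
- by move=> a a'; rewrite !inE => /eqP -> /eqP ->; rewrite irr.
- by move=> a b; rewrite !inE => /eqP -> ?; rewrite comp // eq_sym.
- move=> w wB.
  have -> : [set z in [set~ a0] | e w z] = [set~ a0] :\ w.
    apply/setP => z; rewrite !inE; case: (z =P w) => [->|/eqP zw]; first by rewrite irr andbF.
    by rewrite comp ?andbT // eq_sym.
  by move: (cardsD1 w [set~ a0]); rewrite wB cB => -[].
- by rewrite cards1 cB.
Qed.

Lemma cnt_struct (T : finType) (e : rel T) (sym : symmetric e) (irr : irreflexive e)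
  (d : nat) (hd : forall a, d <= deg e a) (hn : #|T| < 2 * d)
  (A B : {set T}) (a c b c' : T) (aA : a \in A) (cA : c \notin A)
  (bB : b \in B) (cB : c' \notin B)
  (hs : cnt e A B + cnt e B A <= d) : exists l, 1 <= l /\ giso (joinrel l) e.
Proof.
have dn : d < #|T| := leq_ltn_trans (hd a) (deg_lt irr a).
have x1 : 0 < #|A| by apply/card_gt0P; exists a.
have x2 : #|A| < #|T|.
  rewrite -(cardsC A) -addn1 leq_add2l; apply/card_gt0P; exists c; by rewrite inE.
have y1 : 0 < #|B| by apply/card_gt0P; exists b.
have y2 : #|B| < #|T|.
  rewrite -(cardsC B) -addn1 leq_add2l; apply/card_gt0P; exists c'; by rewrite inE.
have := arith2 #|T| d #|A| #|B| (cnt e A B) (cnt e B A).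
move=> /(_ (elimT leP hn) (elimT leP dn) (elimT leP x1) (elimT leP x2) (elimT leP y1) (elimT leP y2)).
move=> /(_ (elimT leP (cnt_lb hd A B)) (elimT leP (cnt_lb2 sym hd A B))).
move=> /(_ (elimT leP (cnt_lb hd B A)) (elimT leP (cnt_lb2 sym hd B A)) (elimT leP hs)).
case=> [h3|[h1 [[hA hB]|[hA hB]]]].
- apply: tri => // a0; apply: leq_trans (hd a0).
  by rewrite -leq_double -mul2n; rewrite h3 in hn; rewrite mul2n in hn.
- exact: (pat sym irr hd hA hB h1 hs).
- by apply: (pat sym irr hd hB hA h1); rewrite addnC.
Qed.

Definition fib (TG TH : finType) (C : {set TG * TH}) (p : TG) : {set TH} :=
  [set a | (p, a) \in C].

Definition gsum (TG TH : finType) (eG : rel TG) (eH : rel TH) (C : {set TG * TH}) : nat :=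
  \sum_(p : TG) \sum_(q : TG) eG p q * cnt eH (fib C p) (fib C q).

Lemma gsum_eq (TG TH : finType) (eG : rel TG) (eH : rel TH) (C : {set TG * TH}) :
  gsum eG eH C = \sum_(d : (TG * TH) * (TG * TH))
     (dprod_rel eG eH d.1 d.2 && (d.1 \in C) && (d.2 \notin C)).
Proof.
symmetry.
transitivity (\sum_(w1 : TG * TH) \sum_(w2 : TG * TH)
   (dprod_rel eG eH w1 w2 && (w1 \in C) && (w2 \notin C) : nat)).
  by rewrite pair_bigA; apply: eq_bigr => -[w1 w2] _.
transitivity (\sum_(p : TG) \sum_(a : TH) \sum_(w2 : TG * TH)
   (dprod_rel eG eH (p, a) w2 && ((p, a) \in C) && (w2 \notin C) : nat)).
  by rewrite [RHS]pair_bigA; apply: eq_bigr => -[p a] _.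
rewrite /gsum; apply: eq_bigr => p _.
transitivity (\sum_(a : TH) \sum_(q : TG) \sum_(b : TH)
   (dprod_rel eG eH (p, a) (q, b) && ((p, a) \in C) && ((q, b) \notin C) : nat)).
  by apply: eq_bigr => a _; rewrite [RHS]pair_bigA; apply: eq_bigr => -[q b] _.
rewrite exchange_big; apply: eq_bigr => q _.
rewrite /cnt big_distrr; apply: eq_bigr => a _.
rewrite big_distrr; apply: eq_bigr => b _.
rewrite /dprod_rel /= !inE.
by case: (eG p q); case: (eH a b); case: ((p, a) \in C); case: ((q, b) \in C).
Qed.

Lemma darts (TG TH : finType) (eG : rel TG) (eH : rel TH) (C : {set TG * TH})
  (S : {set {set TG * TH}})
  (close : forall w1 w2, w1 \in C -> w2 \notin C -> dprod_rel eG eH w1 w2 -> [set w1; w2] \in S) :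
  gsum eG eH C <= #|S|.
Proof.
pose D := [set d : (TG * TH) * (TG * TH) | dprod_rel eG eH d.1 d.2 && (d.1 \in C) && (d.2 \notin C)].
have -> : gsum eG eH C = #|D|.
  rewrite gsum_eq -sum1_card [RHS]big_mkcond /=; apply: eq_bigr => d _.
  by rewrite inE; case: (_ && _).
have inj : {in D &, injective (fun d => [set d.1; d.2])}.
  move=> [w1 w2] [w3 w4]; rewrite !inE /= => /andP[/andP[_ c1] c2] /andP[/andP[_ c3] c4] h.
  have e1 : w1 = w3.
    have : w1 \in [set w3; w4] by rewrite -h !inE eqxx.
    by rewrite !inE => /orP[/eqP //|/eqP e]; move: c4; rewrite -e c1.
  have e2 : w2 = w4.
    have : w2 \in [set w3; w4] by rewrite -h !inE eqxx orbT.
    by rewrite !inE => /orP[/eqP e|/eqP //]; move: c3; rewrite -e (negbTE c2).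
  by rewrite e1 e2.
rewrite -(card_in_imset inj); apply: subset_leq_card; apply/subsetP => E /imsetP [[w1 w2] + ->].
by rewrite inE /= => /andP[/andP[a c1] c2]; exact: close.
Qed.

Lemma gsum_split (TG TH : finType) (eG : rel TG) (eH : rel TH) (symG : symmetric eG)
  (irrG : irreflexive eG) (C : {set TG * TH}) (x : TG) :
  gsum eG eH C = \sum_(q : TG) eG x q * (cnt eH (fib C x) (fib C q) + cnt eH (fib C q) (fib C x))
    + \sum_(p | p != x) \sum_(q | q != x) eG p q * cnt eH (fib C p) (fib C q).
Proof.
rewrite /gsum (bigD1 x) //=.
have -> : \sum_(p | p != x) \sum_q eG p q * cnt eH (fib C p) (fib C q) =
   \sum_(p | p != x) eG p x * cnt eH (fib C p) (fib C x) +
   \sum_(p | p != x) \sum_(q | q != x) eG p q * cnt eH (fib C p) (fib C q).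
  by rewrite -big_split /=; apply: eq_bigr => p _; rewrite (bigD1 x).
have -> : \sum_(p | p != x) eG p x * cnt eH (fib C p) (fib C x) =
   \sum_q eG x q * cnt eH (fib C q) (fib C x).
  by rewrite [RHS](bigD1 x) //= irrG mul0n add0n; apply: eq_bigr => p _; rewrite symG.
by rewrite addnA -big_split /=; congr (_ + _); apply: eq_bigr => q _; rewrite mulnDr.
Qed.

Lemma mindeg_le (T : finType) (e : rel T) (x : T) : mindeg e <= deg e x.
Proof.
rewrite /mindeg; have : x \in index_enum T by rewrite mem_index_enum.
elim: (index_enum T) => // y r IH; rewrite inE big_cons => /orP[/eqP <-|/IH h].
  exact: geq_minl.
exact: leq_trans (geq_minr _ _) h.
Qed.

Lemma degE (T : finType) (e : rel T) (x : T) : deg e x = \sum_y (e x y : nat).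
Proof.
rewrite /deg -sum1dep_card big_mkcond /=; apply: eq_bigr => y _.
by case: (e x y).
Qed.

Lemma rest_lb (TG TH : finType) (eG : rel TG) (eH : rel TH) (C : {set TG * TH})
  (x p q : TG) : p != x -> q != x ->
  eG p q * cnt eH (fib C p) (fib C q) <=
  \sum_(p | p != x) \sum_(q | q != x) eG p q * cnt eH (fib C p) (fib C q).
Proof.
by move=> px qx; rewrite (bigD1 p) //= (bigD1 q) //= -addnA leq_addr.
Qed.

Lemma nbr (T : finType) (e : rel T) (sym : symmetric e) (con : gconnected e) (two : 2 <= #|T|) (x : T) :
  exists y, e x y.
Proof.
have : 0 < #|[set~ x]| by rewrite cardsC1 -ltnS prednK // (leq_trans _ two).
case/card_gt0P => w; rewrite !inE => wx.
case: (pickP (e x)) => [y exy | none]; first by exists y.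
have cl : closed e [set x].
  move=> p q epq; rewrite !inE; apply/eqP/eqP => [px|qx].
    by move: epq; rewrite px none.
  by move: epq; rewrite qx sym none.
by move: (closed_connect cl (con x w)); rewrite !inE eqxx (negbTE wx).
Qed.

Lemma star_card (TG TH : finType) (eG : rel TG) (eH : rel TH) (irrG : irreflexive eG)
  (x : TG) (a : TH) :
  deg eG x * deg eH a <= #|incident_edges (dprod_rel eG eH) (x, a)|.
Proof.
rewrite /deg -cardsX.
have inj : {in setX [set y | eG x y] [set b | eH a b] &, injective (fun w => [set (x, a); w])}.
  move=> [q1 b1] [q2 b2]; rewrite !in_setX !inE => /andP[e1 _] /andP[e2 _] h.
  have : (q1, b1) \in [set (x, a); (q2, b2)] by rewrite -h !inE eqxx orbT.
  rewrite !inE => /orP[/eqP [qx _]|/eqP //].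
  by move: e1; rewrite qx irrG.
rewrite -(card_in_imset inj); apply: subset_leq_card; apply/subsetP => E /imsetP [[q b] + ->].
rewrite in_setX !inE => /andP[exq eab].
apply/andP; split; last by rewrite eqxx.
apply/imsetP; exists ((x, a), (q, b)) => //.
by rewrite inE /dprod_rel /= exq eab.
Qed.

Lemma star_sub (TG TH : finType) (eG : rel TG) (eH : rel TH) (symG : symmetric eG)
  (symH : symmetric eH) (S : {set {set TG * TH}}) (x : TG) (a : TH)
  (hsub : forall q b, eG x q -> eH a b -> [set (x, a); (q, b)] \in S) :
  incident_edges (dprod_rel eG eH) (x, a) \subset S.
Proof.
apply/subsetP => E; rewrite /incident_edges inE => /andP[/imsetP [[p1 p2] + ->]].
rewrite inE /dprod_rel /= => /andP[e1 e2].
rewrite !inE => /orP[/eqP h|/eqP h].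
  by move: h e1 e2 => <- /=; case: p2 => q b; apply: hsub.
rewrite setUC; move: h e1 e2 => <- /=; case: p1 => q b /= e1 e2.
by apply: hsub; rewrite 1?symG 1?symH.
Qed.

Theorem lemma2 (TG TH : finType) (eG : rel TG) (eH : rel TH)
  (symG : symmetric eG) (irrG : irreflexive eG)
  (symH : symmetric eH) (irrH : irreflexive eH)
  (conG : gconnected eG) (conH : gconnected eH)
  (twoG : 2 <= #|TG|) (twoH : 2 <= #|TH|)
  (degH : #|TH| < 2 * mindeg eH)
  (S : {set {set (TG * TH)}})
  (HS : S \subset edges (dprod_rel eG eH)) :
  (#|S| < mindeg eG * mindeg eH ->
     forall (x : TG) (u v : TH),
       connect (del_edges (dprod_rel eG eH) S) (x, u) (x, v))
  /\
  (~ (giso K2rel eG /\ exists l : nat, 1 <= l /\ giso (joinrel l) eH) ->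
   #|S| = mindeg eG * mindeg eH ->
   (forall w : TG * TH, S != incident_edges (dprod_rel eG eH) w) ->
     forall (x : TG) (u v : TH),
       connect (del_edges (dprod_rel eG eH) S) (x, u) (x, v)).
Proof.
have hdH a : mindeg eH <= deg eH a := mindeg_le eH a.
have hdG p : mindeg eG <= deg eG p := mindeg_le eG p.
have dH1 : 0 < mindeg eH.
  by rewrite lt0n; apply/eqP => h; move: degH; rewrite h muln0 ltn0.
have key x u v : ~~ connect (del_edges (dprod_rel eG eH) S) (x, u) (x, v) ->
  exists C : {set TG * TH}, [/\ (x, u) \in C, (x, v) \notin C &
   (forall w1 w2, w1 \in C -> w2 \notin C -> dprod_rel eG eH w1 w2 -> [set w1; w2] \in S)].
  move=> nc; exists [set w | connect (del_edges (dprod_rel eG eH) S) (x, u) w]; split.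
  - by rewrite inE connect0.
  - by rewrite inE.
  - move=> w1 w2; rewrite !inE => c1 c2 a12.
    case: (boolP ([set w1; w2] \in S)) => // nS; exfalso.
    move/negP: c2; apply; apply: (connect_trans c1); apply: connect1.
    by rewrite /del_edges a12 nS.
have low (C : {set TG * TH}) x u v : u \in fib C x -> v \notin fib C x -> forall q,
    mindeg eH <= cnt eH (fib C x) (fib C q) + cnt eH (fib C q) (fib C x).
  move=> uF vF q.
  exact: (@cnt_claim TH eH symH irrH (mindeg eH) hdH degH (fib C x) (fib C q) u v uF vF).
have sumlb (C : {set TG * TH}) x u v : u \in fib C x -> v \notin fib C x ->
   mindeg eG * mindeg eH <= \sum_q eG x q * (cnt eH (fib C x) (fib C q) + cnt eH (fib C q) (fib C x)).
  move=> uF vF; apply: leq_trans (leq_mul (hdG x) (leqnn _)) _.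
  rewrite degE big_distrl /=; apply: leq_sum => q _.
  by case: (eG x q); rewrite ?mul1n ?mul0n //; exact: low uF vF q.
split.
  move=> hlt x u v; case: (boolP (connect _ _ _)) => // nc.
  have [C [uC vC cl]] := key x u v nc.
  have uF : u \in fib C x by rewrite inE.
  have vF : v \notin fib C x by rewrite inE.
  have T1 := darts cl; rewrite (@gsum_split _ _ eG eH symG irrG C x) in T1.
  have := leq_trans (sumlb C x u v uF vF) (leq_trans (leq_addr _ _) T1).
  by rewrite leqNgt hlt.
move=> notiso hcard hstar x u v; case: (boolP (connect _ _ _)) => // nc.
have [C [uC vC cl]] := key x u v nc.
have uF : u \in fib C x by rewrite inE.
have vF : v \notin fib C x by rewrite inE.
have T1 := darts cl; rewrite (@gsum_split _ _ eG eH symG irrG C x) hcard in T1.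
have sl := sumlb C x u v uF vF.
set F := fun q => cnt eH (fib C x) (fib C q) + cnt eH (fib C q) (fib C x).
set Rest := \sum_(p | p != x) \sum_(q | q != x) eG p q * cnt eH (fib C p) (fib C q).
have lowF q : mindeg eH <= F q := low C x u v uF vF q.
case: (pickP (fun y => eG x y && [exists b, b \in fib C y] && [exists b, b \notin fib C y]))
  => [y /andP[/andP[exy /existsP[b bF]] /existsP[b' b'F]] | none].
- have yx : y != x by apply: contraTneq exy => ->; rewrite irrG.
  have lowy z : mindeg eH <= cnt eH (fib C y) (fib C z) + cnt eH (fib C z) (fib C y).
    exact: (@cnt_claim TH eH symH irrH (mindeg eH) hdH degH (fib C y) (fib C z) b b' bF b'F).
  have step1 z : eG y z -> z = x.
    move=> eyz; case: (z =P x) => // /eqP zx; exfalso.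
    have : 0 < cnt eH (fib C y) (fib C z) + cnt eH (fib C z) (fib C y).
      exact: leq_trans dH1 (lowy z).
    rewrite addn_gt0 => /orP[h|h].
    + have := @rest_lb _ _ eG eH C x y z yx zx; rewrite eyz mul1n => hr.
      by move: (leq_trans (leq_add sl (leq_trans h hr)) T1); rewrite addn1 ltnn.
    + have := @rest_lb _ _ eG eH C x z y zx yx; rewrite symG eyz mul1n => hr.
      by move: (leq_trans (leq_add sl (leq_trans h hr)) T1); rewrite addn1 ltnn.
  have degy : deg eG y <= 1.
    rewrite /deg; apply: leq_trans (subset_leq_card (_ : _ \subset [set x])) _.
      by apply/subsetP => z; rewrite !inE => /step1 ->.
    by rewrite cards1.
  have dG1 : mindeg eG <= 1 := leq_trans (hdG y) degy.
  have sumF : \sum_q eG x q * F q <= mindeg eH.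
    apply: leq_trans (leq_trans (leq_addr _ _) T1) _.
    by rewrite -{2}(mul1n (mindeg eH)) leq_mul2r dG1 orbT.
  have step3 z : eG x z -> z = y.
    move=> exz; case: (z =P y) => // /eqP zy; exfalso.
    have : F y + F z <= \sum_q eG x q * F q.
      rewrite (bigD1 y) //= (bigD1 z) /=; last by rewrite zy.
      by rewrite exy exz !mul1n addnA leq_addr.
    move/(leq_trans (leq_add (lowF y) (lowF z)))/(fun h => leq_trans h sumF).
    rewrite -{3}(add0n (mindeg eH)) leq_add2r leqn0 => /eqP h.
    by rewrite h in dH1.
  have isoG : giso K2rel eG.
    have cl2 : closed eG [set x; y].
      move=> p q epq; rewrite !inE; apply/idP/idP.
        case/orP => /eqP pE; move: epq; rewrite pE => e.
          by rewrite (step3 _ e) eqxx orbT.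
        by rewrite (step1 _ e) eqxx.
      case/orP => /eqP qE; move: epq; rewrite qE symG => e.
        by rewrite (step3 _ e) eqxx orbT.
      by rewrite (step1 _ e) eqxx.
    have memxy w : w \in [set x; y].
      by rewrite -(closed_connect cl2 (conG x w)) !inE eqxx.
    exists (fun b => if b then x else y); split.
      exists (fun w => w == x) => [[]|w] /=; first by rewrite eqxx.
        by rewrite (negbTE yx).
      case: (w =P x) => [-> //|/eqP wx].
      by move: (memxy w); rewrite !inE (negbTE wx) /= => /eqP ->.
    by move=> [] [] /=; rewrite /K2rel //= ?irrG // ?exy // symG exy.
  exfalso; apply: notiso; split => //.
  apply: (@cnt_struct TH eH symH irrH (mindeg eH) hdH degH (fib C x) (fib C y) u v b b' uF vF bF b'F).
  apply: leq_trans sumF.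
  by rewrite (bigD1 y) //= exy mul1n leq_addr.
- have hs : \sum_(q | eG x q) F q <= \sum_(q | eG x q) mindeg eH.
    have -> : \sum_(q | eG x q) F q = \sum_q eG x q * F q.
      by rewrite big_mkcond; apply: eq_bigr => q _; case: (eG x q); rewrite ?mul1n ?mul0n.
    apply: leq_trans (leq_trans (leq_addr _ _) T1) _.
    by rewrite sum_nat_cond_const leq_mul2r hdG orbT.
  have each q : eG x q -> F q <= mindeg eH.
    by move=> exq; rewrite (@sum_tight _ (eG x) F (fun _ => mindeg eH) (fun i _ => lowF i) hs q exq).
  have [y0 exy0] := nbr symG conG twoG x.
  have cases q : eG x q -> (forall b, (q, b) \notin C) \/ (forall b, (q, b) \in C).
    move=> exq; move: (none q); rewrite /= exq /=.
    case: (boolP [exists b, b \in fib C q]) => [/existsP [b bq] /= /negbT /existsPn h|/existsPn h _].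
      by right => b0; move: (h b0); rewrite inE negbK.
    by left => b0; move: (h b0); rewrite inE.
  have mixed q1 q2 : eG x q1 -> eG x q2 -> (forall b, (q1, b) \notin C) ->
      (forall b, (q2, b) \in C) -> False.
    move=> e1 e2 h1 h2.
    have f0 : fib C q1 = set0 by apply/setP => b0; rewrite !inE (negbTE (h1 b0)).
    have f1 : fib C q2 = setT by apply/setP => b0; rewrite !inE h2.
    have L0 : #|fib C x| * mindeg eH <= F q1.
      apply: leq_trans _ (leq_addr _ _).
      by have := cnt_lb hdH (fib C x) (fib C q1); rewrite f0 cards0 subn0.
    have L1 : (#|TH| - #|fib C x|) * mindeg eH <= F q2.
      apply: leq_trans _ (leq_addl _ _).
      by have := cnt_lb2 symH hdH (fib C q2) (fib C x); rewrite f1 cardsT subnn subn0.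
    have := leq_add L0 L1; rewrite -mulnDl subnKC ?max_card // => h.
    have := leq_trans h (leq_add (each q1 e1) (each q2 e2)).
    rewrite addnn -mul2n leq_pmul2r // => n2.
    have dn := leq_ltn_trans (hdH u) (deg_lt irrH u).
    move: degH dn n2; rewrite -multE => /leP ? /leP ? /leP ?; lia.
  case: (cases y0 exy0) => [h0|h1].
  + have all0 q b0 : eG x q -> (q, b0) \notin C.
      move=> exq; case: (cases q exq) => [h|h]; first exact: h.
      by exfalso; exact: mixed y0 q exy0 exq h0 h.
    have sub : incident_edges (dprod_rel eG eH) (x, u) \subset S.
      apply: star_sub => // q b0 exq eub; apply: cl => //; first exact: all0.
      by rewrite /dprod_rel /= exq eub.
    have : incident_edges (dprod_rel eG eH) (x, u) == S.
      rewrite eqEcard sub /= hcard.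
      exact: leq_trans (leq_mul (hdG x) (hdH u)) (star_card eH irrG x u).
    by move/eqP => h; move: (hstar (x, u)); rewrite h eqxx.
  + have all1 q b0 : eG x q -> (q, b0) \in C.
      move=> exq; case: (cases q exq) => [h|h]; last exact: h.
      by exfalso; exact: mixed q y0 exq exy0 h h1.
    have sub : incident_edges (dprod_rel eG eH) (x, v) \subset S.
      apply: star_sub => // q b0 exq evb; rewrite setUC; apply: cl => //; first exact: all1.
      by rewrite /dprod_rel /= symG exq symH evb.
    have : incident_edges (dprod_rel eG eH) (x, v) == S.
      rewrite eqEcard sub /= hcard.
      exact: leq_trans (leq_mul (hdG x) (hdH v)) (star_card eH irrG x v).
    by move/eqP => h; move: (hstar (x, v)); rewrite h eqxx.
Qed.
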